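(* Let $(L_*,b)$ and $(M_*,b)$ be chain complexes, $i:(L_*,b)\to(M_*,b)$ and $p:(M_*,b)\to(L_*,b)$ chain maps, and $h$ a map of degree $+1$ on $M_*$ with $ip=1+bh+hb$. Let $\delta$ be a small perturbation, put $A=(1-\delta h)^{-1}\delta$, and define $$i_\infty=i+hAi,\quad p_\infty=p+pAh,\quad b_\infty=b+pAi.$$ Then $$b_\infty(p_\infty i-1)=(p_\infty i-1)b\qquad\text{and}\qquad (p i_\infty-1)b_\infty=b(p i_\infty-1).$$ That is, $p_\infty i-1:(L_*,b)\to(L_*,b_\infty)$ and $p i_\infty-1:(L_*,b_\infty)\to(L_*,b)$ are chain maps.
   Context: Complexes are chain complexes of modules over a ring, with differentials of degree $-1$. The data $i,p,h$ above is called a homotopy retract (HR) datum. A perturbation $\delta$ is a graded map $M_*\to M_*$ of the same degree as $b$ such that $(b+\delta)^2=0$. It is called small if $1-\delta h$ is invertible. It is known (homological perturbation lemma, HR version) that for a small perturbation, $(L_*,b_\infty)$ is a complex, that $i_\infty:(L_*,b_\infty)\to(M_*,b+\delta)$ and $p_\infty:(M_*,b+\delta)\to(L_*,b_\infty)$ are chain maps, and that $i_\infty p_\infty=1+(b+\delta)h_\infty+h_\infty(b+\delta)$, where $h_\infty=h+hAh$. *)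

(* Defs.v *)
From HB Require Import structures.
From mathcomp Require Import all_boot all_order all_algebra.
Set Implicit Arguments. Unset Strict Implicit. Unset Printing Implicit Defensive.
Import Order.TTheory GRing.Theory Num.Theory.
Local Open Scope ring_scope.

(* A graded R-module M_* is a family  M : int -> lmodType R.
   A graded map f : M_* -> N_* of degree d is encoded by ALL its components
   f m n : M m -> N n (each R-linear), subject to the condition that
   f m n = 0 unless n = m + d.  Composition of g after f (f of degree d) is
   (g f) m k = g (m+d) k \o f m (m+d), and a map of degree 0 is encoded
   simply by its diagonal family  f n : M n -> N n.  *)

Definition gmap (R : pzRingType) (M N : int -> lmodType R) :=
  forall m n : int, {linear M m -> N n}.

Definition gmap0 (R : pzRingType) (M N : int -> lmodType R) :=
  forall n : int, {linear M n -> N n}.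

Definition has_degree (R : pzRingType) (M N : int -> lmodType R)
  (d : int) (f : gmap M N) : Prop :=
  forall m n : int, n != m + d -> forall x : M m, f m n x = 0.

(* In what follows: bL is the differential of L_*, i, p the HR maps,
   h the homotopy, delta the perturbation and u (meant to be) the inverse
   (1 - delta h)^{-1}, a map of degree 0. *)

Definition Aop (R : pzRingType) (M : int -> lmodType R)
  (delta : gmap M M) (u : gmap0 M M) (m k : int) (y : M m) : M k :=
  u k (delta m k y).
Arguments Aop {R M} delta u m k y.

Definition iinf (R : pzRingType) (L M : int -> lmodType R)
  (i : gmap0 L M) (h delta : gmap M M) (u : gmap0 M M)
  (n : int) (x : L n) : M n :=
  i n x + h (n - 1) n (Aop delta u n (n - 1) (i n x)).
Arguments iinf {R L M} i h delta u n x.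

Definition pinf (R : pzRingType) (L M : int -> lmodType R)
  (p : gmap0 M L) (h delta : gmap M M) (u : gmap0 M M)
  (n : int) (y : M n) : L n :=
  p n y + p n (Aop delta u (n + 1) n (h n (n + 1) y)).
Arguments pinf {R L M} p h delta u n y.

Definition binf (R : pzRingType) (L M : int -> lmodType R)
  (bL : gmap L L) (i : gmap0 L M) (p : gmap0 M L)
  (delta : gmap M M) (u : gmap0 M M)
  (m k : int) (x : L m) : L k :=
  bL m k x + p k (Aop delta u m k (i m x)).
Arguments binf {R L M} bL i p delta u m k x.

(* Main.v *)
Require Import Defs.
From HB Require Import structures.
From mathcomp Require Import all_boot all_order all_algebra.
From mathcomp Require Import zify.
Import Order.TTheory GRing.Theory Num.Theory.
Local Open Scope ring_scope.

Ltac bring t := repeat match goal with |- _ + ?r0 = 0 =>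
  tryif (lazymatch r0 with ?y + _ => unify y t end) then fail else
  (match r0 with context [?z + (?t' + ?w)] =>
        unify t t'; rewrite (addrCA z t' w) end) end.
Ltac bringN t := repeat match goal with |- _ + ?r0 = 0 =>
  tryif (lazymatch r0 with - ?y + _ => unify y t end) then fail else
  (match r0 with context [?z + (- ?t' + ?w)] =>
        unify t t'; rewrite (addrCA z (- t') w) end) end.

Ltac zc0 := lazymatch goal with
 | |- 0 = 0 => reflexivity
 | |- - ?x + _ = 0 => bring x; rewrite (addKr x); zc0
 | |- ?x + _ = 0 => bringN x; rewrite (addNKr x); zc0
 end.

Ltac lin := repeat (progress (rewrite ?opprD ?opprB ?opprK ?oppr0 ?add0r ?addr0 ?sub0r ?subr0;
   rewrite ?linearD ?linearB ?linearN ?linear0 /=)).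
Ltac zsolve := apply/eqP; rewrite -subr_eq0; apply/eqP; lin;
  rewrite ?opprD ?opprB ?opprK ?oppr0 ?add0r ?addr0;
  rewrite -[LHS]addr0 -?addrA; zc0.
Ltac zsolve_with H := apply/eqP; rewrite -subr_eq0; apply/eqP; rewrite -[RHS]H; zsolve.

Theorem lemma1p7 (R : pzRingType) (L M : int -> lmodType R)
  (bL : gmap L L) (bM : gmap M M) (i : gmap0 L M) (p : gmap0 M L)
  (h delta : gmap M M) (u : gmap0 M M)
  (* degrees: b, delta of degree -1, h of degree +1 *)
  (degbL : has_degree (-1) bL) (degbM : has_degree (-1) bM)
  (degh : has_degree 1 h) (degdelta : has_degree (-1) delta)
  (* (L_*, b) and (M_*, b) are chain complexes: b^2 = 0 *)
  (bL2 : forall (m k : int) (x : L m), bL (m - 1) k (bL m (m - 1) x) = 0)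
  (bM2 : forall (m k : int) (y : M m), bM (m - 1) k (bM m (m - 1) y) = 0)
  (* i and p are chain maps *)
  (ichain : forall (m k : int) (x : L m), bM m k (i m x) = i k (bL m k x))
  (pchain : forall (m k : int) (y : M m), bL m k (p m y) = p k (bM m k y))
  (* i p = 1 + b h + h b *)
  (HR : forall (n : int) (y : M n),
      i n (p n y) = y + bM (n + 1) n (h n (n + 1) y)
                      + h (n - 1) n (bM n (n - 1) y))
  (* delta is a perturbation: (b + delta)^2 = 0 *)
  (pert : forall (m k : int) (y : M m),
      bM (m - 1) k (bM m (m - 1) y + delta m (m - 1) y)
      + delta (m - 1) k (bM m (m - 1) y + delta m (m - 1) y) = 0)
  (* delta is small, and u = (1 - delta h)^{-1} *)
  (uinvl : forall (n : int) (y : M n),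
      u n (y - delta (n + 1) n (h n (n + 1) y)) = y)
  (uinvr : forall (n : int) (y : M n),
      u n y - delta (n + 1) n (h n (n + 1) (u n y)) = y) :
  (* b_oo (p_oo i - 1) = (p_oo i - 1) b *)
  (forall (m k : int) (x : L m),
      binf bL i p delta u m k (pinf p h delta u m (i m x) - x)
      = pinf p h delta u k (i k (bL m k x)) - bL m k x)
  /\
  (* (p i_oo - 1) b_oo = b (p i_oo - 1) *)
  (forall (m k : int) (x : L m),
      p k (iinf i h delta u k (binf bL i p delta u m k x))
        - binf bL i p delta u m k x
      = bL m k (p m (iinf i h delta u m x) - x)).
Proof.
have HR' : forall n j j' (y : M n), j = n + 1 -> j' = n - 1 ->
    i n (p n y) = y + bM j n (h n j y) + h j' n (bM n j' y).
  by move=> n j j' y -> ->; exact: HR.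
have uinvl' : forall n j (y : M n), j = n + 1 -> u n (y - delta j n (h n j y)) = y.
  by move=> n j y ->; exact: uinvl.
have A1o : forall a c j (y : M a), j = c + 1 ->
    delta j c (h c j (u c (delta a c y))) = u c (delta a c y) - delta a c y.
  move=> a c j y ->; have E := uinvr c (delta a c y).
  by rewrite -{3}E; zsolve.
have A2o : forall a c j (y : M a), j = c + 1 ->
    u c (delta j c (h c j (delta a c y))) = u c (delta a c y) - delta a c y.
  move=> a c j y ->; have E := uinvl c (delta a c y); rewrite linearB in E.
  by rewrite -{3}E; zsolve.
have pert' : forall a c e (y : M a), c = a - 1 -> e = c - 1 ->
    bM c e (delta a c y) + delta c e (bM a c y) + delta c e (delta a c y) = 0.
  move=> a c e y -> ->; have E := pert a (a - 1 - 1) y.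
  rewrite -[RHS]E; lin; rewrite bM2; zsolve.
have X : forall a c e (y : M a), c = a - 1 -> e = c - 1 ->
    bM c e (u c (delta a c y)) + u e (delta c e (bM a c y))
    + u e (delta c e (i c (p c (u c (delta a c y))))) = 0.
  move=> a c e y Ec Ee.
  have Ea : a = c + 1 by lia.
  have Ece : c = e + 1 by lia.
  have Y0 : forall z : M a, bM c e (u c (delta a c z)) + delta c e (bM a c z)
     + delta c e (u c (delta a c z))
     + delta c e (bM a c (h c a (u c (delta a c z)))) = 0.
    move=> z. pose v := z + h c a (u c (delta a c z)).
    have Hz : z = v - h c a (delta a c v).
      by rewrite /v; lin; rewrite (A1o a c a z Ea); zsolve.
    clearbody v; rewrite Hz; lin; rewrite !(A2o a c a v Ea); lin.
    zsolve_with (pert' a c e v Ec Ee).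
  rewrite (HR' c a e (u c (delta a c y)) Ea Ee); lin.
  rewrite -[LHS](uinvl' e c _ Ece) -(linear0 (u e)); congr (u e _).
  lin; rewrite !(A1o c e c _ Ece); lin.
  zsolve_with (Y0 y).
have Xo : forall a c e (y : M a), c = a - 1 -> e = c - 1 ->
    u e (delta c e (i c (p c (u c (delta a c y)))))
    = - bM c e (u c (delta a c y)) - u e (delta c e (bM a c y)).
  move=> a c e y Ec Ee; have H := X a c e y Ec Ee; zsolve_with H.
have P : forall a c (y : M a), c = a - 1 ->
    binf bL i p delta u a c (pinf p h delta u a y)
    = pinf p h delta u c (bM a c y + delta a c y).
  move=> a c y Ec; have Ea : a = c + 1 by lia.
  rewrite /binf /pinf /Aop -Ea; lin.
  rewrite (HR' a (a + 1) c y erefl Ec) (Xo (a + 1) a c (h a (a + 1) y) _ Ec); last by lia.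
  rewrite !pchain (A2o a c a y Ea); zsolve.
have I : forall a c (x : L a), c = a - 1 ->
    bM a c (iinf i h delta u a x) + delta a c (iinf i h delta u a x)
    = iinf i h delta u c (binf bL i p delta u a c x).
  move=> a c x Ec; have Ea : a = c + 1 by lia.
  rewrite /iinf /binf /Aop -Ec; lin.
  rewrite (Xo a c (c - 1) (i a x) Ec erefl) !ichain.
  rewrite (HR' c a (c - 1) _ Ea erefl) (A1o a c a (i a x) Ea); zsolve.
split=> m k x.
  have [Hk|Hk] := eqVneq k (m - 1).
    subst k.
    have binfB : forall (y z : L m), binf bL i p delta u m (m - 1) (y - z)
        = binf bL i p delta u m (m - 1) y - binf bL i p delta u m (m - 1) z.
      by move=> y z; rewrite /binf /Aop; zsolve.
    rewrite binfB P // ichain /pinf /binf /Aop; lin.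
    rewrite (A2o m (m - 1) (m - 1 + 1) (i m x) erefl); zsolve.
  rewrite /binf /pinf /Aop !(degbL m k Hk) !(degdelta m k Hk); lin; done.
have [Hk|Hk] := eqVneq k (m - 1).
  subst k.
  rewrite -I // /iinf /binf /Aop; lin; rewrite !pchain.
  rewrite (A1o m (m - 1) m (i m x)); last by lia.
  zsolve.
rewrite /binf /iinf /Aop !(degbL m k Hk) !(degdelta m k Hk); lin; done.
Qed.
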